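(* Assume conditions (A1) and (A2). Then there is an absolute constant $c>0$ such that for all $0\le\lambda\le\varepsilon_n^{-1}$, \[ \Big|\Psi_n(\lambda)-\frac{\lambda^2}{2}\Big|\le c\,\lambda^{2+\rho}\varepsilon_n^\rho+\frac{\lambda^2\delta_n^2}{2}. \]
   Context: Standing setup: Fix $n\ge 1$. Let $(\Omega,\mathcal F,\mathbf P)$ be a probability space with $\sigma$-fields $\{\emptyset,\Omega\}=\mathcal F_0\subseteq\mathcal F_1\subseteq\cdots\subseteq\mathcal F_n\subseteq\mathcal F$, and let $(\xi_i,\mathcal F_i)_{i=0,\dots,n}$ be a sequence of square-integrable martingale differences with $\xi_0=0$ (each $\xi_i$ is $\mathcal F_i$-measurable and $\mathbf E[\xi_i\mid\mathcal F_{i-1}]=0$). Set $\langle X\rangle_n=\sum_{i=1}^n\mathbf E[\xi_i^2\mid\mathcal F_{i-1}]$ and $\xi^+=\max\{\xi,0\}$. Condition (A1): there exist a constant $\rho\in(0,1]$ and a number $\varepsilon_n\in(0,\tfrac12]$ such that $\mathbf E[|\xi_i|^{2+\rho}e^{\varepsilon_n^{-1}\xi_i^+}\mid\mathcal F_{i-1}]\le \varepsilon_n^{\rho}\,\mathbf E[\xi_i^2\mid\mathcal F_{i-1}]$ for all $1\le i\le n$. Condition (A2): there exists a number $\delta_n\in[0,\tfrac12]$ such that $|\langle X\rangle_n-1|\le\delta_n^2$ a.s. Predictable cumulant: $\Psi_n(\lambda)=\sum_{i=1}^n\log\mathbf E[e^{\lambda\xi_i}\mid\mathcal F_{i-1}]$.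 *)

(* Defs.v *)
From HB Require Import structures.
From mathcomp Require Import all_boot all_order all_algebra.
From mathcomp Require Import all_classical all_reals all_analysis.
Set Implicit Arguments. Unset Strict Implicit. Unset Printing Implicit Defensive.
Import Order.TTheory GRing.Theory Num.Theory.
Local Open Scope classical_set_scope.
Local Open Scope ring_scope.

Section defs.
Context {d : measure_display} {T : measurableType d} {R : realType}.

Definition sub_sigma_field (G : set (set T)) : Prop :=
  sigma_algebra setT G /\ (forall A, G A -> measurable A).

Definition G_measurable (G : set (set T)) (f : T -> R) : Prop :=
  forall B : set R, measurable B -> G (f @^-1` B).

Definition is_cond_exp (P : probability T R) (G : set (set T))
    (X Y : T -> R) : Prop :=
  [/\ G_measurable G Y,
      P.-integrable setT (fun x => (X x)%:E),
      P.-integrable setT (fun x => (Y x)%:E) &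
      forall A, G A ->
        (\int[P]_(x in A) (Y x)%:E = \int[P]_(x in A) (X x)%:E)%E].

Definition filtration (n : nat) (F : nat -> set (set T)) : Prop :=
  [/\ F 0%N = [set set0; setT],
      (forall i, (i <= n)%N -> sub_sigma_field (F i)) &
      (forall i, (i < n)%N -> F i `<=` F i.+1)].

Definition sq_int_mart_diff (P : probability T R) (n : nat)
    (F : nat -> set (set T)) (xi : nat -> T -> R) : Prop :=
  [/\ xi 0%N = (fun _ => 0),
      (forall i, (i <= n)%N -> G_measurable (F i) (xi i)),
      (forall i, (i <= n)%N ->
         P.-integrable setT (fun x => ((xi i x) ^+ 2)%:E)) &
      (forall i, (1 <= i <= n)%N ->
         is_cond_exp P (F i.-1) (xi i) (fun _ => 0))].

End defs.

(* Main.v *)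
Require Import Defs.
From HB Require Import structures.
From mathcomp Require Import all_boot all_order all_algebra.
From mathcomp Require Import all_classical all_reals all_analysis.
From mathcomp Require Import ring lra.
Import Order.TTheory GRing.Theory Num.Theory.
Import numFieldNormedType.Exports.
Local Open Scope classical_set_scope.
Local Open Scope ring_scope.

Section G.
Context {d : measure_display} {T : measurableType d} {R : realType}.
Variable P : probability T R.

Local Notation ssf := (@sub_sigma_field d T).
Local Notation Gm := (@G_measurable d T R).
Definition hl (G : set (set T)) (f : T -> R) := forall r, G [set x | f x < r].


Lemma G_setC G A : ssf G -> G A -> G (~` A).
Proof. by move=> [[_ hC _] _] /hC; rewrite setTD. Qed.

Lemma G_setU G A B : ssf G -> G A -> G B -> G (A `|` B).
Proof.
move=> [[h0 _ hU] _] hA hB.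
have -> : A `|` B = \bigcup_k (fun k : nat => if k == 0%N then A else B) k.
  apply/seteqP; split => x.
    by case=> h; [exists 0%N | exists 1%N].
  by case=> -[|k] _ /=; [left|right].
by apply: hU => -[|k].
Qed.

Lemma G_setI G A B : ssf G -> G A -> G B -> G (A `&` B).
Proof.
move=> hG hA hB; rewrite -[A `&` B]setCK setCI.
by apply: G_setC => //; apply: G_setU => //; apply: G_setC.
Qed.

Lemma G_set0 G : ssf G -> G set0.
Proof. by case=> -[]. Qed.

Lemma G_setT G : ssf G -> G setT.
Proof. by move=> hG; rewrite -setC0; apply: G_setC => //; exact: G_set0. Qed.

Lemma G_bigcup G (A : (set T)^nat) : ssf G -> (forall n, G (A n)) -> G (\bigcup_n A n).
Proof. by case=> -[_ _ hU] _; apply: hU. Qed.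

Lemma Gm_hl G f : Gm G f -> hl G f.
Proof.
move=> hf r; have := hf `]-oo, r[%classic (measurable_itv _).
by congr G; apply/seteqP; split => x /=; rewrite in_itv /= ?andbT.
Qed.

Lemma hl_gt G f : ssf G -> hl G f -> forall r, G [set x | r < f x].
Proof.
move=> hG hf r.
have -> : [set x | r < f x] = \bigcup_n ~` [set x | f x < r + n.+1%:R^-1].
  apply/seteqP; split => x /=.
    move=> /ltr_add_invr [k hk]; exists k => //=; apply/negP; rewrite -leNgt ltW //.
  case=> k _ /negP; rewrite -leNgt; apply: lt_le_trans.
  by rewrite ltrDl invr_gt0.
by apply: G_bigcup => // n; apply: G_setC => //; apply: hf.
Qed.

Lemma hl_cst G c : ssf G -> hl G (fun _ => c).
Proof.
move=> hG r /=; have [cr|rc] := ltP c r.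
  by have := G_setT _ hG; congr G; apply/seteqP; split.
have := G_set0 _ hG; congr G; apply/seteqP; split => x //=.
Qed.

Lemma hl_scale G f a : ssf G -> hl G f -> hl G (fun x => a * f x).
Proof.
move=> hG hf r; have [a0|a0|->] := ltgtP a 0; last first.
- by have := hl_cst _ 0 hG r; congr G; apply/seteqP; split => x /=; rewrite mul0r.
- have -> : [set x | a * f x < r] = [set x | f x < r / a].
    by apply/seteqP; split => x /=; rewrite ltr_pdivlMr // mulrC.
  exact: hf.
- have -> : [set x | a * f x < r] = [set x | r / a < f x].
    by apply/seteqP; split => x /=; rewrite ltr_ndivrMr // mulrC.
  exact: hl_gt.
Qed.

Lemma hl_add G f g : ssf G -> hl G f -> hl G g -> hl G (fun x => f x + g x).
Proof.
move=> hG hf hg r /=.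
pose C n := if @unpickle rat n is Some q then
  [set x | f x < ratr q] `&` [set x | g x < r - ratr q] else set0.
have -> : [set x | f x + g x < r] = \bigcup_n C n.
  apply/seteqP; split => x /=.
    rewrite -ltrBrDr => h.
    have [q] := rat_in_itvoo h; rewrite in_itv /= => /andP[h1 h2].
    exists (pickle q); first by [].
    rewrite /C pickleK; change (f x < ratr q /\ g x < r - ratr q).
    by split; lra.
  case=> n _; rewrite /C; case: unpickle => [q|]; last by case.
  move=> H; change (f x < ratr q /\ g x < r - ratr q) in H.
  change (f x + g x < r); case: H => h1 h2; lra.
apply: G_bigcup => // n; rewrite /C; case: unpickle => [q|]; last exact: G_set0.
by apply: G_setI.
Qed.

Lemma ver_le G (Y1 Y2 : T -> R) : ssf G -> hl G Y1 -> hl G Y2 ->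
  P.-integrable setT (EFin \o Y1) -> P.-integrable setT (EFin \o Y2) ->
  (forall A, G A -> \int[P]_(x in A) Y1 x <= \int[P]_(x in A) Y2 x) ->
  {ae P, forall x, Y1 x <= Y2 x}.
Proof.
move=> hG m1 m2 i1 i2 hle.
pose B (q r : rat) := Y2 @^-1` `]-oo, ratr q[ `&` Y1 @^-1` `]ratr r, +oo[.
have GB q r : G (B q r).
  apply: G_setI => //.
    by have := m2 (ratr q); congr G; apply/seteqP; split => x /=; rewrite in_itv.
  by have := hl_gt _ _ hG m1 (ratr r); congr G; apply/seteqP; split => x /=; rewrite in_itv /= andbT.
have mB q r : measurable (B q r) by apply: hG.2.
have B0 q r : q < r -> P (B q r) = 0%E.
  move=> qr.
  have i1B : P.-integrable (B q r) (EFin \o Y1) by apply: integrableS i1.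
  have i2B : P.-integrable (B q r) (EFin \o Y2) by apply: integrableS i2.
  have ic k : P.-integrable (B q r) (EFin \o cst k).
    exact: finite_measure_integrable_cst.
  have h1 : ratr r * fine (P (B q r)) <= \int[P]_(x in B q r) Y1 x.
    rewrite -Rintegral_cst//; apply: (le_Rintegral (mB q r) (ic _) i1B).
    by move=> x [_ /=]; rewrite in_itv /= andbT => /ltW.
  have h2 : \int[P]_(x in B q r) Y2 x <= ratr q * fine (P (B q r)).
    rewrite -Rintegral_cst//; apply: (le_Rintegral (mB q r) i2B (ic _)).
    by move=> x [/=]; rewrite in_itv /= => /ltW.
  have h3 := hle _ (GB q r).
  have hf : P (B q r) \is a fin_num by rewrite fin_num_measure.
  have hp : 0 <= fine (P (B q r)) by rewrite fine_ge0.
  have qrR : ratr q < ratr r :> R by rewrite ltr_rat.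
  have : fine (P (B q r)) = 0.
    apply/eqP; rewrite eq_le hp andbT.
    have : (ratr r - ratr q) * fine (P (B q r)) <= 0 :> R.
      rewrite mulrBl subr_le0; apply: (le_trans h1); apply: (le_trans h3); exact: h2.
    by rewrite pmulr_rle0 // subr_gt0.
  by move=> h0; rewrite -(fineK hf) h0.
pose C n := if @unpickle (rat * rat)%type n is Some (q, r) then
  (if q < r then B q r else set0) else set0.
have hC n : {ae P, forall x, ~ C n x}.
  exists (C n); split.
  - rewrite /C; case: unpickle => [[q r]|] //; case: ifP => //.
  - rewrite /C; case: unpickle => [[q r]|]; [case: ifP => [/B0//|_]|];
    exact: measure0.
  - by move=> x /= /contrapT.
have := ae_foralln hC; apply: filterS => x hx.
rewrite leNgt; apply/negP => h21.
have [q] := rat_in_itvoo h21; rewrite in_itv /= => /andP[hq1 hq2].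
have [r] := rat_in_itvoo hq2; rewrite in_itv /= => /andP[hr1 hr2].
apply: (hx (pickle (q, r))); rewrite /C pickleK.
have -> : q < r by rewrite -(ltr_rat R).
by split => /=; rewrite in_itv /= ?andbT.
Qed.
End G.

Section S.
Context {R : realType}.

Lemma mono0 (f df : R -> R) (b : R) : (forall x : R, is_derive x (1:R) f (df x)) ->
  0 <= b -> (forall x, 0 <= x <= b -> 0 <= df x) -> f 0 <= f b.
Proof.
move=> hd b0 hdf.
have hc : {within `[0, b], continuous f}.
  by apply: derivable_within_continuous => x _; by case: (hd x).
have [c cin e] := MVT_segment b0 (fun x _ => hd x) hc.
rewrite -subr_ge0 e subr0 mulr_ge0 //; apply: hdf.
by move: cin; rewrite in_itv.
Qed.

Lemma expR_le4 (z : R) : z <= 1 -> expR z <= 4.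
Proof.
move=> z1.
have h1 := @expR_ge1Dx R (- 2^-1).
have h2 := @expRxMexpNx_1 R (2^-1).
have h3 : expR 1 = expR (2^-1) * expR (2^-1) :> R.
  by rewrite -expRD; congr expR; time lra.
have a0 := @expR_gt0 R (2^-1).
have : expR (2^-1) <= 2 :> R by nra.
move=> ha; apply: (le_trans (y := expR 1)); first by rewrite ler_expR.
by rewrite h3; nra.
Qed.

Lemma der_ep (c a0 a1 a2 a3 x : R) :
  is_derive x (1:R) (fun z => c * expR z + a0 + a1 * z + a2 * z ^+ 2 + a3 * z ^+ 3)
    (c * expR x + a1 + 2 * a2 * x + 3 * a3 * x ^+ 2).
Proof.
have h := is_deriveD (is_deriveD (is_deriveD (is_deriveD
   (is_deriveZ c (is_derive_expR x)) (@is_derive_cst R R R a0 x 1))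
   (is_deriveZ a1 (is_derive_id x 1)))
   (is_deriveZ a2 (is_deriveX 2 (is_derive_id x 1))))
   (is_deriveZ a3 (is_deriveX 3 (is_derive_id x 1))).
have -> : (fun z => c * expR z + a0 + a1 * z + a2 * z ^+ 2 + a3 * z ^+ 3) =
  (c \*: expR + cst a0 + a1 \*: id + a2 \*: id ^+ 2 + a3 \*: id ^+ 3).
  by apply/funext => z; rewrite !fctE /GRing.scale /=.
apply: (is_derive_eq h).
rewrite /GRing.scale /= !mulr1 expr1; lra.
Qed.

Lemma mono_ep (c a0 a1 a2 a3 z : R) : 0 <= z ->
  (forall x, 0 <= x <= z -> 0 <= c * expR x + a1 + 2 * a2 * x + 3 * a3 * x ^+ 2) ->
  c + a0 <= c * expR z + a0 + a1 * z + a2 * z ^+ 2 + a3 * z ^+ 3.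
Proof.
move=> z0 h.
have := @mono0 _ _ z (der_ep c a0 a1 a2 a3) z0 h.
by rewrite /= expR0 !expr0n /= !mulr0 !addr0 mulr1.
Qed.

Lemma tp_low (z : R) : 0 <= z -> 0 <= expR z - 1 - z - z ^+ 2 / 2.
Proof.
move=> z0.
have hh : 1 + -1 <= 1 * expR z + -1 + -1 * z + (- 2^-1) * z ^+ 2 + 0 * z ^+ 3.
  apply: mono_ep => // x _; have := expR_ge1Dx x; lra.
lra.
Qed.

Lemma tp_h1 (x : R) : 0 <= x <= 1 -> expR x - 1 <= 4 * x.
Proof.
move=> /andP[x0 x1].
have hh : -1 + 1 <= -1 * expR x + 1 + 4 * x + 0 * x ^+ 2 + 0 * x ^+ 3.
  apply: mono_ep => // y /andP[_ yx].
  have h4 : y <= 1 by exact: le_trans yx x1.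
  have := @expR_le4 y h4; lra.
lra.
Qed.

Lemma tp_h2 (x : R) : 0 <= x <= 1 -> expR x - 1 - x <= 2 * x ^+ 2.
Proof.
move=> /andP[x0 x1].
have hh : -1 + 1 <= -1 * expR x + 1 + 1 * x + 2 * x ^+ 2 + 0 * x ^+ 3.
  apply: mono_ep => // y /andP[y0 yx].
  have h4 : 0 <= y <= 1 by rewrite y0 (le_trans yx x1).
  have := tp_h1 y h4; lra.
lra.
Qed.

Lemma tp_up (x : R) : 0 <= x <= 1 -> expR x - 1 - x - x ^+ 2 / 2 <= x ^+ 3.
Proof.
move=> /andP[x0 x1].
have hh : -1 + 1 <= -1 * expR x + 1 + 1 * x + 2^-1 * x ^+ 2 + (2/3) * x ^+ 3.
  apply: mono_ep => // y /andP[y0 yx].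
  have h4 : 0 <= y <= 1 by rewrite y0 (le_trans yx x1).
  have := tp_h2 y h4; lra.
have : x ^+ 3 >= 0 by rewrite exprn_ge0.
lra.
Qed.

Lemma alg_neg (z E F : R) : 0 <= z <= 1 ->
  0 <= E - 1 - z - z ^+ 2 / 2 <= z ^+ 3 -> E * F = 1 -> 0 < F <= 1 ->
  `|F - 1 + z - z ^+ 2 / 2| <= 2 * z ^+ 3.
Proof.
move=> /andP[z0 z1] /andP[r0 r1] EF /andP[F0 F1].
have id1 : F - 1 + z - z ^+ 2 / 2 + F * (z ^+ 4 / 4 + (E - 1 - z - z ^+ 2 / 2) * (1 - z + z ^+ 2 / 2))
   = (1 - z + z ^+ 2 / 2) * (F * E - 1).
  by field; rewrite ?mulf_neq0 ?pnatr_eq0.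
rewrite (mulrC F E) EF subrr mulr0 in id1.
have -> : F - 1 + z - z ^+ 2 / 2 = - (F * (z ^+ 4 / 4 + (E - 1 - z - z ^+ 2 / 2) * (1 - z + z ^+ 2 / 2))).
  by apply/eqP; rewrite -addr_eq0 id1.
move: r0 r1; move: (E - 1 - z - z ^+ 2 / 2) => r r0 r1.
have q0 : 0 <= 1 - z + z ^+ 2 / 2 by nra.
have q1 : 1 - z + z ^+ 2 / 2 <= 1 by nra.
move: q0 q1; move: (1 - z + z ^+ 2 / 2) => q q0 q1.
have z4 : z ^+ 4 <= z ^+ 3.
  by rewrite exprS -[leRHS]mul1r ler_wpM2r // exprn_ge0.
have hz3 : 0 <= z ^+ 3 by rewrite exprn_ge0.
have hz4 : 0 <= z ^+ 4 by rewrite exprn_ge0.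
move: z4 hz3 hz4 r0 r1; move: (z ^+ 4) (z ^+ 3) => a b z4 hz3 hz4 r0 r1.
have hrq : 0 <= r * q <= b by apply/andP; split; nra.
rewrite normrN normrM (gtr0_norm F0) ger0_norm; last by nra.
nra.
Qed.

Lemma tp_neg (z : R) : 0 <= z <= 1 ->
  `|expR (- z) - 1 + z - z ^+ 2 / 2| <= 2 * z ^+ 3.
Proof.
move=> hz; have /andP[z0 z1] := hz.
apply: (@alg_neg z (expR z)) => //.
- by rewrite tp_low // tp_up.
- by rewrite expRxMexpNx_1.
- by rewrite expR_gt0 expR_le1 oppr_le0.
Qed.


Lemma rem_bound (y rho : R) : 0 < rho <= 1 ->
  `|expR y - 1 - y - y ^+ 2 / 2| <= 4 * (`|y| `^ (2 + rho)) * expR (Num.max y 0).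
Proof.
move=> /andP[r0 r1].
have t0 : 0 <= `|y| by [].
have pw : `|y| `^ (2 + rho) = `|y| ^+ 2 * `|y| `^ rho.
  rewrite powRD; last by apply/implyP => /eqP; lra.
  by rewrite -(powR_mulrn 2 t0).
rewrite pw.
have s0 : 0 <= `|y| `^ rho by apply: powR_ge0.
have ts : `|y| <= 1 -> `|y| <= `|y| `^ rho.
  move=> t1; have [y0|y0] := eqVneq y 0; first by rewrite y0 normr0.
  by apply: ger1_powR => //; rewrite normr_gt0 y0.
have s1 : 1 <= `|y| -> 1 <= `|y| `^ rho.
  by move=> t1; rewrite -(powRr0 `|y|); apply: ler_powR => //; lra.
have m1 : 1 <= expR (Num.max y 0) by rewrite -expR0 ler_expR le_max lexx orbT.
have mE : expR y <= expR (Num.max y 0) by rewrite ler_expR le_max lexx.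
have E0 : 0 < expR y by apply: expR_gt0.
have yt : y ^+ 2 = `|y| ^+ 2 by rewrite real_normK // num_real.
have hy : - `|y| <= y <= `|y| by rewrite -ler_norml.
have [t1|t1] := leP `|y| 1.
  have h3 : `|expR y - 1 - y - y ^+ 2 / 2| <= 2 * `|y| ^+ 3.
    have [y0|y0] := leP 0 y.
      have yl1 : y <= 1 by rewrite -(ger0_norm y0).
      have a := tp_low y y0.
      have b : expR y - 1 - y - y ^+ 2 / 2 <= y ^+ 3 by apply: tp_up; rewrite y0 yl1.
      rewrite (ger0_norm y0) ger0_norm //.
      have : 0 <= y ^+ 3 by rewrite exprn_ge0.
      lra.
    have h : `|expR (- - y) - 1 + - y - (- y) ^+ 2 / 2| <= 2 * (- y) ^+ 3.
      by apply: tp_neg; rewrite oppr_ge0 (ltW y0) -(ltr0_norm y0).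
    rewrite opprK sqrrN in h; rewrite (ltr0_norm y0).
    exact: h.
  have {}ts := ts t1.
  move: h3 ts s0 m1; move: (`|y| `^ rho) (expR (Num.max y 0)) => s m h3 ts s0 m1.
  have e3 : `|y| ^+ 3 = `|y| ^+ 2 * `|y| by rewrite exprSr.
  have q0 : 0 <= `|y| ^+ 2 by rewrite exprn_ge0.
  move: h3 e3 q0; move: (`|y| ^+ 3) (`|y| ^+ 2) => c3 c2 h3 e3 q0.
  have : c2 * `|y| <= c2 * s by rewrite ler_wpM2l.
  have : c2 * s <= c2 * s * m by rewrite ler_peMr // mulr_ge0.
  have : 0 <= c2 * s * m by rewrite !mulr_ge0 //; lra.
  lra.
have {}s1 := s1 (ltW t1).
have hb : `|expR y - 1 - y - y ^+ 2 / 2| <= expR (Num.max y 0) + 1 + `|y| + `|y| ^+ 2 / 2.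
  rewrite ler_norml; apply/andP; split.
    have : 0 <= y ^+ 2 by rewrite sqr_ge0.
    lra.
  have : 0 <= y ^+ 2 by rewrite sqr_ge0.
  lra.
move: hb s1 s0 m1; move: (`|y| `^ rho) (expR (Num.max y 0)) => s m hb s1 s0 m1.
have c21 : 1 <= `|y| ^+ 2 by rewrite expr_ge1 // ltW.
have ct : `|y| <= `|y| ^+ 2 by rewrite expr2 ler_peMl // ltW.
move: hb c21 ct; move: (`|y| ^+ 2) => c2 hb c21 ct.
have : c2 * m <= c2 * s * m.
  apply: ler_wpM2r; first lra.
  rewrite ler_peMr //; lra.
have : m <= c2 * m by rewrite ler_peMl //; lra.
have : c2 <= c2 * m by rewrite ler_peMr //; lra.
lra.
Qed.

End S.

Section S.
Context {R : realType}.

Lemma ln_le_sub1 (m : R) : 0 < m -> ln m <= m - 1.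
Proof.
move=> m0; have := @le_ln1Dx R (m - 1).
have -> : 1 + (m - 1) = m by ring.
apply; lra.
Qed.

Lemma ln_ge (u : R) : 0 <= u -> u - u ^+ 2 <= ln (1 + u).
Proof.
move=> u0.
have p : 0 < 1 + u by lra.
have p' : 0 < (1 + u)^-1 by rewrite invr_gt0.
have h := ln_le_sub1 _ p'.
rewrite lnV ?posrE // in h.
have e : (1 + u)^-1 - 1 = - (u / (1 + u)) by field; lra.
rewrite e in h.
have : u - u ^+ 2 <= u / (1 + u).
  rewrite ler_pdivlMr //. 
  have : 0 <= u ^+ 3 by rewrite exprn_ge0.
  have : (u - u ^+ 2) * (1 + u) = u - u ^+ 3 by ring.
  lra.
lra.
Qed.

Lemma pow_split (x rho : R) : 0 <= x -> 0 < rho -> x `^ (2 + rho) = x ^+ 2 * x `^ rho.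
Proof.
move=> x0 r0.
rewrite powRD; last by apply/implyP => /eqP; lra.
by rewrite -(powR_mulrn 2 x0).
Qed.

Lemma bern (x eps rho : R) : 0 < eps -> 0 < rho ->
  (1 + rho / 2) * eps `^ rho * x ^+ 2 - rho / 2 * eps `^ (2 + rho) <= `|x| `^ (2 + rho).
Proof.
move=> e0 r0.
have ep : 0 < eps `^ rho by apply: powR_gt0.
rewrite (pow_split _ _ (ltW e0) r0) (pow_split _ _ (normr_ge0 x) r0).
rewrite real_normK ?num_real //.
have [x0|x0] := eqVneq x 0.
  rewrite x0 normr0 expr0n /=.
  have : 0 <= rho / 2 * (eps ^+ 2 * eps `^ rho).
    apply: mulr_ge0; first lra.
    by apply: mulr_ge0; [rewrite exprn_ge0 // ltW | exact: ltW].
  lra.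
set u := `|x| / eps.
have u0 : 0 < u by rewrite /u divr_gt0 // normr_gt0.
have xu : `|x| = u * eps by rewrite /u divfK // gt_eqF.
have pu : `|x| `^ rho = u `^ rho * eps `^ rho by rewrite xu powRM // ltW.
have lu : 1 - u^-1 <= ln u.
  have u0' : 0 < u^-1 by rewrite invr_gt0.
  have h := ln_le_sub1 _ u0'.
  by rewrite lnV ?posrE // in h; lra.
have eu : 1 + rho * ln u <= u `^ rho.
  by rewrite /powR gt_eqF // mulrC; apply: expR_ge1Dx.
have ue : u^-1 * `|x| = eps by rewrite xu mulrA mulVf ?mul1r // gt_eqF.
rewrite pu.
have hx2 : 0 <= x ^+ 2 by rewrite sqr_ge0.
have key : (1 + rho / 2) * x ^+ 2 - rho / 2 * eps ^+ 2 <= x ^+ 2 * u `^ rho.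
  have h1 : x ^+ 2 * (1 + rho * (1 - u^-1)) <= x ^+ 2 * u `^ rho.
    rewrite ler_wpM2l //; apply: le_trans eu; rewrite lerD2l ler_wpM2l //; lra.
  apply: le_trans h1.
  have ex : x ^+ 2 = `|x| ^+ 2 by rewrite real_normK ?num_real.
  have : x ^+ 2 * u^-1 = `|x| * eps by rewrite ex expr2 -mulrA (mulrC _ u^-1) ue.
  have : 0 <= (`|x| - eps) ^+ 2 by rewrite sqr_ge0.
  rewrite ex; move=> h2 h3.
  have e4 : `|x| ^+ 2 * (1 + rho * (1 - u^-1)) = `|x| ^+ 2 * (1 + rho) - rho * (`|x| ^+ 2 * u^-1).
    ring.
  rewrite e4 h3.
  nra.
have := ler_wpM2r (ltW ep) key.

lra.
Qed.


Lemma per_i (lam eps rho v w m : R) :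
  0 < rho <= 1 -> 0 < eps -> 0 <= lam -> lam * eps <= 1 ->
  0 <= v <= eps ^+ 2 -> w <= eps `^ rho * v -> 1 <= m ->
  m <= 1 + lam ^+ 2 * v / 2 + 4 * lam `^ (2 + rho) * w ->
  1 + lam ^+ 2 * v / 2 - 4 * lam `^ (2 + rho) * w <= m ->
  `|ln m - lam ^+ 2 * v / 2| <= 6 * (lam `^ (2 + rho) * eps `^ rho) * v.
Proof.
move=> /andP[r0 r1] e0 l0 le1 /andP[v0 ve] hw m1 mu ml.
have kap : lam `^ (2 + rho) * eps `^ rho = lam ^+ 2 * (lam * eps) `^ rho.
  by rewrite pow_split // powRM // ?ltW // mulrA.
have s0 : 0 <= (lam * eps) `^ rho by apply: powR_ge0.
have les : (lam * eps) ^+ 2 <= (lam * eps) `^ rho.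
  have [z|nz] := eqVneq (lam * eps) 0; first by rewrite z expr0n /= powR_ge0.
  have p0 : 0 < lam * eps by rewrite lt_def nz mulr_ge0 // ltW.
  rewrite -(powR_mulrn 2 (ltW p0)); apply: ger_powR; first by rewrite p0.
  lra.
have lp0 : 0 <= lam `^ (2 + rho) by apply: powR_ge0.
have hw' : lam `^ (2 + rho) * w <= lam `^ (2 + rho) * eps `^ rho * v.
  by rewrite -mulrA ler_wpM2l.
rewrite kap in hw' *; rewrite -[6 * _ * v]mulrA -[4 * _ * w]mulrA in mu ml *.
have ha : lam ^+ 2 * v / 2 <= (lam * eps) `^ rho / 2.
  have : lam ^+ 2 * v <= lam ^+ 2 * eps ^+ 2 by rewrite ler_wpM2l // exprn_ge0.
  rewrite -exprMn; lra.
have a0 : 0 <= lam ^+ 2 * v / 2 by rewrite !mulr_ge0 // ?exprn_ge0 //; lra.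
have eK : lam ^+ 2 * (lam * eps) `^ rho * v = 2 * (lam * eps) `^ rho * (lam ^+ 2 * v / 2).
  by field; rewrite ?pnatr_eq0.
rewrite eK in hw' *.
have mp : 0 < m by lra.
have Lup := ln_le_sub1 _ mp.
have L0 : 0 <= ln m by rewrite ln_ge0.
move: ha a0 hw' mu ml Lup L0 s0 eK.
move: (lam ^+ 2 * v / 2) ((lam * eps) `^ rho) (lam `^ (2 + rho) * w) => a s K ha a0 hw' mu ml Lup L0 s0 eK.
have as0 : 0 <= a * s by rewrite mulr_ge0.
have a2 : a ^+ 2 <= a * s / 2 by rewrite expr2; nra.
rewrite ler_norml; apply/andP; split; last by lra.
have [u0|u0] := leP (a - 4 * (2 * s * a)) 0; first by lra.
have h1 : ln (1 + (a - 4 * (2 * s * a))) <= ln m.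
  by rewrite ler_ln ?posrE //; lra.
have h2 := ln_ge _ (ltW u0).
have h3 : (a - 4 * (2 * s * a)) ^+ 2 <= a ^+ 2.
  by rewrite ler_sqr ?nnegrE //; lra.
lra.
Qed.

End S.

Section M.
Context {d : measure_display} {T : measurableType d} {R : realType}.
Variable P : probability T R.
Local Notation ssf := (@sub_sigma_field d T).
Local Notation I A f := (P.-integrable A (EFin \o f)).

Lemma iZ A (f : T -> R) a : measurable A -> I A f -> I A (fun x => a * f x).
Proof.
move=> mA hf; apply: (eq_integrable mA _ _ _ (integrableZl mA a hf)) => x _.
by rewrite /= EFinM.
Qed.

Lemma iD A (f g : T -> R) : measurable A -> I A f -> I A g -> I A (fun x => f x + g x).
Proof.
move=> mA hf hg; apply: (eq_integrable mA _ _ _ (integrableD mA hf hg)) => x _.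
by rewrite /= EFinD.
Qed.

Lemma iC A (c : R) : measurable A -> I A (fun _ => c).
Proof. by move=> mA; apply: (finite_measure_integrable_cst P c mA). Qed.

Lemma i4 A (f1 f2 f3 : T -> R) c0 c1 c2 c3 : measurable A -> I A f1 -> I A f2 -> I A f3 ->
  I A (fun x => c0 + c1 * f1 x + c2 * f2 x + c3 * f3 x).
Proof.
move=> mA h1 h2 h3.
by do 3 (apply: iD => //; last exact: iZ); exact: iC.
Qed.

Lemma Rint_lin A (f1 f2 f3 : T -> R) c0 c1 c2 c3 : measurable A -> I A f1 -> I A f2 -> I A f3 ->
  \int[P]_(x in A) (c0 + c1 * f1 x + c2 * f2 x + c3 * f3 x) =
  c0 * fine (P A) + c1 * \int[P]_(x in A) f1 x + c2 * \int[P]_(x in A) f2 x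
   + c3 * \int[P]_(x in A) f3 x.
Proof.
move=> mA h1 h2 h3.
rewrite RintegralD //; last 2 first.
- by apply: iD => //; [apply: iD => //; [exact: iC|exact: iZ]|exact: iZ].
- exact: iZ.
rewrite RintegralD //; last 2 first.
- by apply: iD => //; [exact: iC|exact: iZ].
- exact: iZ.
rewrite RintegralD //; last 2 first.
- exact: iC.
- exact: iZ.
by rewrite Rintegral_cst // !RintegralZl.
Qed.


Local Notation ce G X Y := (is_cond_exp P G X Y).

Lemma iS A (f : T -> R) : measurable A -> I setT f -> I A f.
Proof. by move=> mA; apply: integrableS. Qed.

Lemma ce_int G X Y A : ce G X Y -> G A ->
  \int[P]_(x in A) Y x = \int[P]_(x in A) X x.
Proof. by case=> _ _ _ h GA; rewrite /Rintegral h. Qed.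

Lemma hl4 G (Y1 Y2 Y3 : T -> R) c0 c1 c2 c3 : ssf G ->
  G_measurable G Y1 -> G_measurable G Y2 -> G_measurable G Y3 ->
  hl G (fun x => c0 + c1 * Y1 x + c2 * Y2 x + c3 * Y3 x).
Proof.
move=> hG g1 g2 g3.
apply: (hl_add _ (fun x => c0 + c1 * Y1 x + c2 * Y2 x) (fun x => c3 * Y3 x) hG);
  last exact: (hl_scale _ _ c3 hG (Gm_hl _ _ g3)).
apply: (hl_add _ (fun x => c0 + c1 * Y1 x) (fun x => c2 * Y2 x) hG);
  last exact: (hl_scale _ _ c2 hG (Gm_hl _ _ g2)).
apply: (hl_add _ (fun x => c0) (fun x => c1 * Y1 x) hG);
  last exact: (hl_scale _ _ c1 hG (Gm_hl _ _ g1)).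
exact: hl_cst.
Qed.

Lemma ver_cmp G (Xa Ya X1 X2 X3 Y1 Y2 Y3 : T -> R) (c0 c1 c2 c3 : R) :
  ssf G -> ce G Xa Ya -> ce G X1 Y1 -> ce G X2 Y2 -> ce G X3 Y3 ->
  (forall x, Xa x <= c0 + c1 * X1 x + c2 * X2 x + c3 * X3 x) ->
  {ae P, forall x, Ya x <= c0 + c1 * Y1 x + c2 * Y2 x + c3 * Y3 x}.
Proof.
move=> hG ha h1 h2 h3 hle.
have [ga iXa iYa _] := ha.
have [g1 iX1 iY1 _] := h1.
have [g2 iX2 iY2 _] := h2.
have [g3 iX3 iY3 _] := h3.
apply: (ver_le P G Ya (fun x => c0 + c1 * Y1 x + c2 * Y2 x + c3 * Y3 x) hG).
- exact: (Gm_hl _ _ ga).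
- exact: hl4.
- exact: iYa.
- by apply: i4.
move=> A GA; have mA := hG.2 A GA.
apply: (le_trans (y := \int[P]_(x in A) (c0 + c1 * X1 x + c2 * X2 x + c3 * X3 x))).
  rewrite (ce_int _ _ _ _ ha GA); apply: (le_Rintegral mA (iS _ Xa mA iXa)
    (i4 _ _ _ _ c0 c1 c2 c3 mA (iS _ X1 mA iX1) (iS _ X2 mA iX2) (iS _ X3 mA iX3))).
  by move=> x _; apply: hle.
have jX1 := iS _ X1 mA iX1; have jX2 := iS _ X2 mA iX2; have jX3 := iS _ X3 mA iX3.
have jY1 := iS _ Y1 mA iY1; have jY2 := iS _ Y2 mA iY2; have jY3 := iS _ Y3 mA iY3.
rewrite !Rint_lin //.
by rewrite (ce_int _ _ _ _ h1 GA) (ce_int _ _ _ _ h2 GA) (ce_int _ _ _ _ h3 GA).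
Qed.

Lemma ver_cmp' G (Xa Ya X1 X2 X3 Y1 Y2 Y3 : T -> R) (c0 c1 c2 c3 : R) :
  ssf G -> ce G Xa Ya -> ce G X1 Y1 -> ce G X2 Y2 -> ce G X3 Y3 ->
  (forall x, c0 + c1 * X1 x + c2 * X2 x + c3 * X3 x <= Xa x) ->
  {ae P, forall x, c0 + c1 * Y1 x + c2 * Y2 x + c3 * Y3 x <= Ya x}.
Proof.
move=> hG ha h1 h2 h3 hle.
have [ga iXa iYa _] := ha.
have [g1 iX1 iY1 _] := h1.
have [g2 iX2 iY2 _] := h2.
have [g3 iX3 iY3 _] := h3.
apply: (ver_le P G (fun x => c0 + c1 * Y1 x + c2 * Y2 x + c3 * Y3 x) Ya hG).
- exact: hl4.
- exact: (Gm_hl _ _ ga).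
- by apply: i4.
- exact: iYa.
move=> A GA; have mA := hG.2 A GA.
apply: (le_trans (y := \int[P]_(x in A) (c0 + c1 * X1 x + c2 * X2 x + c3 * X3 x))); last first.
  rewrite (ce_int _ _ _ _ ha GA); apply: (le_Rintegral mA
    (i4 _ _ _ _ c0 c1 c2 c3 mA (iS _ X1 mA iX1) (iS _ X2 mA iX2) (iS _ X3 mA iX3))
    (iS _ Xa mA iXa)).
  by move=> x _; apply: hle.
have jX1 := iS _ X1 mA iX1; have jX2 := iS _ X2 mA iX2; have jX3 := iS _ X3 mA iX3.
have jY1 := iS _ Y1 mA iY1; have jY2 := iS _ Y2 mA iY2; have jY3 := iS _ Y3 mA iY3.
rewrite !Rint_lin //.
by rewrite (ce_int _ _ _ _ h1 GA) (ce_int _ _ _ _ h2 GA) (ce_int _ _ _ _ h3 GA).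
Qed.

End M.

Section P.
Context {R : realType}.

Lemma max_scale (lam eps z : R) : 0 < eps -> 0 <= lam -> lam * eps <= 1 ->
  Num.max (lam * z) 0 <= Num.max z 0 / eps.
Proof.
move=> e0 l0 le1; case: (boolP (z <= 0)) => z0; last rewrite -ltNge in z0.
  have : lam * z <= 0 by rewrite mulr_ge0_le0.
  by move=> h; rewrite (max_r h) (max_r z0) mul0r.
have h : 0 <= lam * z by apply: mulr_ge0 => //; apply: ltW.
rewrite (max_l h) (max_l (ltW z0)) ler_pdivlMr // mulrAC.
by rewrite -[leRHS]mul1r ler_wpM2r // ltW.
Qed.

Lemma max0_ge0 (z : R) : 0 <= Num.max z 0.
Proof.
case: (boolP (z <= 0)) => z0; first by rewrite (max_r z0).
by rewrite -ltNge in z0; rewrite (max_l (ltW z0)) ltW.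
Qed.

Lemma pt_rem (lam eps rho z : R) : 0 < rho <= 1 -> 0 < eps -> 0 <= lam -> lam * eps <= 1 ->
  `|expR (lam * z) - 1 - lam * z - lam ^+ 2 / 2 * z ^+ 2| <=
   4 * lam `^ (2 + rho) * (`|z| `^ (2 + rho) * expR (Num.max z 0 / eps)).
Proof.
move=> hr e0 l0 le1.
have := rem_bound (lam * z) rho hr.
rewrite normrM (ger0_norm l0) powRM // exprMn.
have -> : lam ^+ 2 / 2 * z ^+ 2 = lam ^+ 2 * z ^+ 2 / 2 by rewrite mulrAC.
move=> h; apply: (le_trans h).
rewrite -!mulrA ler_wpM2l //; rewrite ler_wpM2l ?powR_ge0 // ler_wpM2l ?powR_ge0 //.
by rewrite ler_expR max_scale.
Qed.

End P.

Theorem lemma3 (R : realType) :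
  exists c : R, 0 < c /\
  forall (d : measure_display) (T : measurableType d) (P : probability T R)
    (n : nat) (F : nat -> set (set T)) (xi : nat -> T -> R)
    (rho eps delta : R) (V : nat -> T -> R),
    (1 <= n)%N ->
    filtration n F ->
    sq_int_mart_diff P n F xi ->
    (* V i is a version of E[xi_i^2 | F_{i-1}] *)
    (forall i, (1 <= i <= n)%N ->
       is_cond_exp P (F i.-1) (fun x => (xi i x) ^+ 2) (V i)) ->
    (* (A1) *)
    0 < rho <= 1 -> 0 < eps <= 2^-1 ->
    (forall i, (1 <= i <= n)%N ->
       exists W : T -> R,
         is_cond_exp P (F i.-1)
           (fun x => (`|xi i x| `^ (2 + rho)) * expR (Num.max (xi i x) 0 / eps))
           W /\
         {ae P, forall x, W x <= eps `^ rho * V i x}) ->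
    (* (A2) *)
    0 <= delta <= 2^-1 ->
    {ae P, forall x, `|\sum_(1 <= i < n.+1) V i x - 1| <= delta ^+ 2} ->
    forall lambda : R, 0 <= lambda <= eps^-1 ->
    forall M : nat -> T -> R,
      (* M i is a version of E[exp(lambda xi_i) | F_{i-1}] *)
      (forall i, (1 <= i <= n)%N ->
         is_cond_exp P (F i.-1) (fun x => expR (lambda * xi i x)) (M i)) ->
      {ae P, forall x,
        `|\sum_(1 <= i < n.+1) ln (M i x) - lambda ^+ 2 / 2|
          <= c * lambda `^ (2 + rho) * eps `^ rho
             + lambda ^+ 2 * delta ^+ 2 / 2}.
Proof.
exists 8; split; first by [].
move=> d T P n F xi rho eps delta V n1 hF hxi hV hrho heps hA1 hdel hA2 lam hlam M hM.
case: hxi => xi0 ximeas xisq xice.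
case: hF => F0 hFs hFinc.
have /andP[r0 r1] := hrho.
have /andP[e0 e1] := heps.
have /andP[l0 l1] := hlam.
have /andP[dl0 dl1] := hdel.
have le1 : lam * eps <= 1 by rewrite -ler_pdivlMr // mul1r.
have ep : 0 < eps `^ rho by apply: powR_gt0.
have kap0 : 0 <= lam `^ (2 + rho) * eps `^ rho by rewrite mulr_ge0 ?powR_ge0.
have key : forall i, {ae P, forall x, (1 <= i <= n)%N -> 0 <= V i x /\
   `|ln (M i x) - lam ^+ 2 * V i x / 2| <= 6 * (lam `^ (2 + rho) * eps `^ rho) * V i x}.
  move=> i; case: (boolP (1 <= i <= n)%N) => hi; last first.
    by apply: aeW => x.
  have hG : sub_sigma_field (F i.-1).
    by apply: hFs; apply: leq_trans (leq_pred i) _; case/andP: hi.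
  have [W [hW hWle]] := hA1 i hi.
  have cxi := xice i hi.
  have cV := hV i hi.
  have cM := hM i hi.
  have ha : {ae P, forall x, 0 + 0 * 0 + 0 * 0 + 0 * 0 <= W x}.
    apply: (ver_cmp' P _ _ _ _ _ _ _ _ _ _ _ _ _ hG hW cxi cxi cxi) => x.
    rewrite !mul0r !addr0.
    by apply: mulr_ge0; [exact: powR_ge0|exact: expR_ge0].
  have hc : {ae P, forall x, - (rho / 2 * eps `^ (2 + rho)) + (1 + rho / 2) * eps `^ rho * V i x
      + 0 * 0 + 0 * 0 <= W x}.
    apply: (ver_cmp' P _ _ _ _ _ _ _ _ _ _ _ _ _ hG hW cV cxi cxi) => x.
    rewrite !mul0r !addr0.
    have h1 := bern (xi i x) eps rho e0 r0.
    have h2 : `|xi i x| `^ (2 + rho) <= `|xi i x| `^ (2 + rho) * expR (Num.max (xi i x) 0 / eps).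
      rewrite ler_peMr ?powR_ge0 // -expR0 ler_expR divr_ge0 ?max0_ge0 //.
      exact: ltW.
    lra.
  have hd : {ae P, forall x, 1 + lam * 0 + 0 * 0 + 0 * 0 <= M i x}.
    apply: (ver_cmp' P _ _ _ _ _ _ _ _ _ _ _ _ _ hG cM cxi cxi cxi) => x.
    have := expR_ge1Dx (lam * xi i x); lra.
  have he : {ae P, forall x, M i x <= 1 + lam * 0 + lam ^+ 2 / 2 * V i x
      + 4 * lam `^ (2 + rho) * W x}.
    apply: (ver_cmp P _ _ _ _ _ _ _ _ _ _ _ _ _ hG cM cxi cV hW) => x.
    have := pt_rem lam eps rho (xi i x) hrho e0 l0 le1.
    rewrite ler_norml => /andP[_ h]; lra.
  have hf : {ae P, forall x, 1 + lam * 0 + lam ^+ 2 / 2 * V i x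
      + - (4 * lam `^ (2 + rho)) * W x <= M i x}.
    apply: (ver_cmp' P _ _ _ _ _ _ _ _ _ _ _ _ _ hG cM cxi cV hW) => x.
    have := pt_rem lam eps rho (xi i x) hrho e0 l0 le1.
    rewrite ler_norml => /andP[h _]; lra.
  have H1 : {ae P, forall x, (0 + 0 * 0 + 0 * 0 + 0 * 0 <= W x) /\
      (- (rho / 2 * eps `^ (2 + rho)) + (1 + rho / 2) * eps `^ rho * V i x
      + 0 * 0 + 0 * 0 <= W x) /\ (1 + lam * 0 + 0 * 0 + 0 * 0 <= M i x)}.
    by apply: (filterS3 _ _ ha hc hd) => x a b c.
  have H2 : {ae P, forall x, (M i x <= 1 + lam * 0 + lam ^+ 2 / 2 * V i x
      + 4 * lam `^ (2 + rho) * W x) /\ (1 + lam * 0 + lam ^+ 2 / 2 * V i x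
      + - (4 * lam `^ (2 + rho)) * W x <= M i x) /\ (W x <= eps `^ rho * V i x)}.
    by apply: (filterS3 _ _ he hf hWle) => x a b c.
  apply: (filterS2 _ _ H1 H2) => x [a [b c]] [e [f g]] _.
  have v0 : 0 <= V i x.
    have : 0 <= eps `^ rho * V i x by lra.
    by rewrite pmulr_rge0.
  have pe : eps `^ (2 + rho) = eps ^+ 2 * eps `^ rho by apply: pow_split => //; exact: ltW.
  have vle : V i x <= eps ^+ 2.
    have k0 : 0 < rho / 2 * eps `^ rho by rewrite mulr_gt0 //; lra.
    rewrite -(ler_pM2l k0).
    rewrite pe in b; lra.
  split => //.
  apply: (per_i lam eps rho (V i x) (W x) (M i x)) => //; try lra.
have all := ae_foralln key.
apply: (filterS2 _ _ all hA2) => x hall h2.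
set kap := lam `^ (2 + rho) * eps `^ rho in kap0 hall.
rewrite -[8 * _ * _]mulrA -/kap.
set S := \sum_(1 <= i < n.+1) V i x in h2.
have s1 : \sum_(1 <= i < n.+1) ln (M i x) - lam ^+ 2 / 2 =
  \sum_(1 <= i < n.+1) (ln (M i x) - lam ^+ 2 * V i x / 2) + lam ^+ 2 / 2 * (S - 1).
  rewrite sumrB -mulr_suml -mulr_sumr -/S.
  by field; rewrite ?pnatr_eq0.
have s2 : `|\sum_(1 <= i < n.+1) (ln (M i x) - lam ^+ 2 * V i x / 2)| <= 6 * kap * S.
  apply: (le_trans (ler_norm_sum _ _ _)).
  rewrite /S mulr_sumr; apply: ler_sum_nat => i /andP[i1 i2].
  by case: (hall i); rewrite ?i1 //= -ltnS.
rewrite s1; apply: (le_trans (ler_normD _ _)).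
rewrite normrM (ger0_norm (_ : 0 <= lam ^+ 2 / 2)); last first.
  by rewrite mulr_ge0 ?exprn_ge0 //; lra.
have hS : S <= 5 / 4.
  move: h2; rewrite ler_norml => /andP[_ h]; nra.
have t1 : 6 * kap * S <= 6 * kap * (5 / 4).
  by rewrite ler_wpM2l // mulr_ge0.
have t2 : lam ^+ 2 / 2 * `|S - 1| <= lam ^+ 2 / 2 * delta ^+ 2.
  by rewrite ler_wpM2l // mulr_ge0 ?exprn_ge0 //; lra.
lra.
Qed.
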